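(* Let $(X,\beta)$ be a locally finite prechart and $x,y\in X$ with $x\not\sim y$. Then there exists $i\in\mathbb{N}$ such that $\Phi^{(i)}_\beta(x,y)=\Phi^{(i+1)}_\beta(x,y)$.
   Context: Fix a set $V=\{v_1,v_2,\dots\}$ of variables and a set $\Sigma$ of letters. A prechart is a pair $(X,\beta)$ with $\beta:X\to P_{\mathrm{fin}}(\Sigma\times X+V)$; write $x\xrightarrow{a}x'$ iff $(a,x')\in\beta(x)$ and $E(x)=\beta(x)\cap V$. It is locally finite if from each state only finitely many states are reachable. A bisimulation is a relation $R\subseteq X\times X$ such that whenever $(x,y)\in R$: $E(x)=E(y)$; each $x\xrightarrow{a}x'$ is matched by some $y\xrightarrow{a}y'$ with $(x',y')\in R$; and symmetrically; $x\sim y$ iff related by some bisimulation. A 1-bounded pseudometric on $X$ is $d:X\times X\to[0,1]$ with $d(x,x)=0$, symmetry and triangle inequality. The discrete pseudometric is $\top(x,y)=0$ if $x=y$, $1$ otherwise. For a pseudometric $d$, $d^\uparrow$ on $\Sigma\times X+V$ is $d^\uparrow((a,x),(a,y))=\tfrac12 d(x,y)$, $d^\uparrow(m,n)=0$ if $m=n$, $1$ otherwise. $\mathcal H(d)(A,B)=\max\{\sup_{x\in A}\inf_{y\in B}d(x,y),\sup_{y\in B}\inf_{x\in A}d(y,x)\}$ with $\sup\emptyset=0$, $\inf\emptyset=1$. $\Phi_\beta(d)(x,y)=\mathcal H(d^\uparrow)(\beta(x),\beta(y))$; $\Phi^{(0)}_\beta=\top$, $\Phi^{(i+1)}_\beta=\Phi_\beta(\Phi^{(i)}_\beta)$.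 *)

(* Defs.v *)
From Stdlib Require Import Reals List ClassicalEpsilon.
Import ListNotations.
Open Scope R_scope.

(* Variables V = {v_1, v_2, ...} are represented by nat.
   A finite subset of Sigma * X + V is represented by a list (membership = In);
   all notions below depend only on membership. *)
Definition prechart (Sigma X : Type) := X -> list ((Sigma * X) + nat).

Section Prechart.
Context {Sigma X : Type} (beta : prechart Sigma X).

Definition trans (x : X) (a : Sigma) (x' : X) : Prop := In (inl (a, x')) (beta x).

Inductive reach : X -> X -> Prop :=
| reach_refl x : reach x x
| reach_step x a x' y : trans x a x' -> reach x' y -> reach x y.

Definition locally_finite : Prop :=
  forall x, exists l : list X, forall y, reach x y -> In y l.

(* E(x) = beta(x) ∩ V, compared as sets *)
Definition bisimulation (Rel : X -> X -> Prop) : Prop :=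
  forall x y, Rel x y ->
    (forall v : nat, In (inr v) (beta x) <-> In (inr v) (beta y)) /\
    (forall a x', trans x a x' -> exists y', trans y a y' /\ Rel x' y') /\
    (forall a y', trans y a y' -> exists x', trans x a x' /\ Rel x' y').

Definition bisimilar (x y : X) : Prop :=
  exists Rel, bisimulation Rel /\ Rel x y.

End Prechart.

Definition dec01 (P : Prop) : R :=
  if excluded_middle_informative P then 0 else 1.

Definition top_metric {X : Type} (x y : X) : R := dec01 (x = y).

Definition lift {Sigma X : Type} (d : X -> X -> R)
  (m n : (Sigma * X) + nat) : R :=
  match m, n with
  | inl (a, x), inl (b, y) =>
      if excluded_middle_informative (a = b) then d x y / 2 else 1
  | _, _ => dec01 (m = n)
  end.

Fixpoint sup_list {B : Type} (f : B -> R) (l : list B) : R :=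
  match l with
  | [] => 0
  | [b] => f b
  | b :: l' => Rmax (f b) (sup_list f l')
  end.

Fixpoint inf_list {B : Type} (f : B -> R) (l : list B) : R :=
  match l with
  | [] => 1
  | [b] => f b
  | b :: l' => Rmin (f b) (inf_list f l')
  end.

Definition hausdorff {B : Type} (d : B -> B -> R) (A C : list B) : R :=
  Rmax (sup_list (fun a => inf_list (fun c => d a c) C) A)
       (sup_list (fun c => inf_list (fun a => d c a) A) C).

Definition Phi {Sigma X : Type} (beta : prechart Sigma X)
  (d : X -> X -> R) (x y : X) : R :=
  hausdorff (lift d) (beta x) (beta y).

Fixpoint Phi_iter {Sigma X : Type} (beta : prechart Sigma X) (i : nat)
  : X -> X -> R :=
  match i with
  | O => top_metric
  | S i' => Phi beta (Phi_iter beta i')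
  end.

(* Main.v *)
Require Import Defs.
From Stdlib Require Import Reals List.
From Stdlib Require Import Lra Lia Classical ClassicalEpsilon.
Import ListNotations.
Open Scope R_scope.

Lemma sup_closed {B} (P : R -> Prop) (f : B -> R) l :
  P 0 -> (forall b, In b l -> P (f b)) -> P (sup_list f l).
Proof.
  intros H0 H. induction l as [|b l IH]; simpl; auto.
  destruct l as [|c l]. { apply H; simpl; auto. }
  unfold Rmax; destruct Rle_dec.
  - apply IH; intros; apply H; simpl in *; tauto.
  - apply H; simpl; auto.
Qed.

Lemma inf_closed {B} (P : R -> Prop) (f : B -> R) l :
  P 1 -> (forall b, In b l -> P (f b)) -> P (inf_list f l).
Proof.
  intros H0 H. induction l as [|b l IH]; simpl; auto.
  destruct l as [|c l]. { apply H; simpl; auto. }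
  unfold Rmin; destruct Rle_dec.
  - apply H; simpl; auto.
  - apply IH; intros; apply H; simpl in *; tauto.
Qed.

Lemma sup_ge {B} (f : B -> R) l b : In b l -> f b <= sup_list f l.
Proof.
  induction l as [|c l IH]; simpl; [tauto|].
  intros [<-|Hb].
  - destruct l; [lra|]. apply Rmax_l.
  - destruct l; [destruct Hb|]. eapply Rle_trans; [apply IH; auto|]. apply Rmax_r.
Qed.

Lemma inf_le {B} (f : B -> R) l b : In b l -> inf_list f l <= f b.
Proof.
  induction l as [|c l IH]; simpl; [tauto|].
  intros [<-|Hb].
  - destruct l; [lra|]. apply Rmin_l.
  - destruct l; [destruct Hb|]. eapply Rle_trans; [|apply IH; auto]. apply Rmin_r.
Qed.

Lemma sup_le {B} (f : B -> R) l r : 0 <= r -> (forall b, In b l -> f b <= r) -> sup_list f l <= r.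
Proof. intros. apply (sup_closed (fun s => s <= r)); auto. Qed.

Lemma inf_ge {B} (f : B -> R) l r : r <= 1 -> (forall b, In b l -> r <= f b) -> r <= inf_list f l.
Proof. intros. apply (inf_closed (fun s => r <= s)); auto. Qed.

Lemma inf_lt {B} (f : B -> R) l r : r <= 1 -> inf_list f l < r -> exists b, In b l /\ f b < r.
Proof.
  intros Hr H. destruct (classic (exists b, In b l /\ f b < r)) as [|Hn]; auto.
  exfalso. assert (r <= inf_list f l); [|lra].
  apply inf_ge; auto. intros b Hb. destruct (Rle_dec r (f b)); auto.
  exfalso; apply Hn; exists b; split; auto; lra.
Qed.

Lemma sup_mono {B} (f g : B -> R) l : (forall b, f b <= g b) -> sup_list f l <= sup_list g l.
Proof.
  intros H. induction l as [|b l IH]; simpl; [lra|].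
  destruct l; auto. unfold Rmax in *. repeat destruct Rle_dec; specialize (H b); lra.
Qed.

Lemma inf_mono {B} (f g : B -> R) l : (forall b, f b <= g b) -> inf_list f l <= inf_list g l.
Proof.
  intros H. induction l as [|b l IH]; simpl; [lra|].
  destruct l; auto. unfold Rmin in *. repeat destruct Rle_dec; specialize (H b); lra.
Qed.

Lemma Rmax_mono a b c e : a <= c -> b <= e -> Rmax a b <= Rmax c e.
Proof. intros; unfold Rmax; repeat destruct Rle_dec; lra. Qed.

Definition Sv (r : R) : Prop := r = 0 \/ exists k, r = / 2 ^ k.

Lemma dec01_S P : Sv (dec01 P).
Proof. unfold dec01; destruct excluded_middle_informative; [left; auto|right; exists 0%nat; simpl; lra]. Qed.

Section S.
Context {Sigma X : Type} (beta : prechart Sigma X).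

Lemma vals i : forall u v, Sv (Phi_iter beta i u v).
Proof.
  induction i; intros u v; simpl.
  - apply dec01_S.
  - unfold Phi, hausdorff.
    assert (Hl : forall m n : (Sigma*X)+nat, Sv (lift (Phi_iter beta i) m n)).
    { intros [[a u']|w] [[b v']|w']; simpl; try apply dec01_S.
      destruct excluded_middle_informative.
      + destruct (IHi u' v') as [->|[k ->]]; [left; lra|right; exists (S k); simpl].
        rewrite Rinv_mult. lra.
      + right; exists 0%nat; simpl; lra. }
    assert (H0 : Sv 0) by (left; auto). assert (H1 : Sv 1) by (right; exists 0%nat; simpl; lra).
    unfold Rmax; destruct Rle_dec;
    apply sup_closed; auto; intros; apply inf_closed; auto.
Qed.

Lemma Sv_bounds r : Sv r -> 0 <= r <= 1.
Proof.
  intros [->|[k ->]]; [lra|]. split.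
  - left; apply Rinv_0_lt_compat, pow_lt; lra.
  - rewrite <- Rinv_1. apply Rinv_le_contravar; [lra|].
    replace 1 with (2 ^ 0) by (simpl; lra). apply Rle_pow; [lra|lia].
Qed.

Lemma diag i : forall z, Phi_iter beta i z z = 0.
Proof.
  induction i; intros z; simpl.
  - unfold top_metric, dec01; destruct excluded_middle_informative; congruence.
  - apply Rle_antisym; [|apply (Sv_bounds _ (vals (S i) z z))].
    unfold Phi, hausdorff. apply Rmax_lub; apply sup_le; try lra; intros b Hb;
    (eapply Rle_trans; [apply (inf_le _ _ b Hb)|]);
    destruct b as [[a w]|w]; simpl;
    [destruct excluded_middle_informative; [rewrite IHi; lra|congruence]
    |unfold dec01; destruct excluded_middle_informative; [lra|congruence]
    |destruct excluded_middle_informative; [rewrite IHi; lra|congruence]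
    |unfold dec01; destruct excluded_middle_informative; [lra|congruence]].
Qed.

Lemma Phi_mono (d d' : X -> X -> R) u v : (forall p q, d p q <= d' p q) -> Phi beta d u v <= Phi beta d' u v.
Proof.
  intros H. unfold Phi, hausdorff.
  assert (Hl : forall m n : (Sigma*X)+nat, lift d m n <= lift d' m n).
  { intros [[a p]|w] [[b q]|w']; simpl; try lra.
    destruct excluded_middle_informative; [specialize (H p q); lra|lra]. }
  assert (Hm : forall a b c e, a <= c -> b <= e -> Rmax a b <= Rmax c e)
    by (intros; unfold Rmax; repeat destruct Rle_dec; lra).
  apply Hm; apply sup_mono; intros; apply inf_mono; auto.
Qed.

Lemma decr i : forall u v, Phi_iter beta (S i) u v <= Phi_iter beta i u v.
Proof.
  induction i; intros u v.
  - change (Phi_iter beta 0 u v) with (dec01 (u = v)). unfold dec01.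
    destruct excluded_middle_informative.
    + subst. rewrite diag; lra.
    + apply (Sv_bounds _ (vals 1 u v)).
  - simpl. apply Phi_mono. intros; apply IHi.
Qed.

End S.

Section B.
Context {Sigma X : Type} (beta : prechart Sigma X).

Definition Q (u v : X) : Prop :=
  forall eps, 0 < eps -> forall N, exists i, (N <= i)%nat /\ Phi_iter beta i u v < eps.

Definition Hyp (A C : list ((Sigma * X) + nat)) : Prop :=
  forall eps, 0 < eps -> forall N, exists i, (N <= i)%nat /\
    sup_list (fun m => inf_list (fun c => lift (Phi_iter beta i) m c) C) A < eps.

Lemma var_lemma A C v : In (inr v) A -> Hyp A C -> In (inr v) C.
Proof.
  intros Hin H. destruct (H 1 ltac:(lra) 0%nat) as [i [_ Hi]].
  pose proof (sup_ge (fun m => inf_list (fun c => lift (Phi_iter beta i) m c) C) _ _ Hin) as Hs.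
  simpl in Hs.
  destruct (inf_lt (fun c => lift (Phi_iter beta i) (inr v) c) C 1 ltac:(lra) (Rle_lt_trans _ _ _ Hs Hi)) as [c [Hc Hlt]].
  destruct c as [[b w]|w]; simpl in Hlt; unfold dec01 in Hlt;
    destruct excluded_middle_informative; try lra; congruence.
Qed.

Lemma elem_bound (a : Sigma) x' (c : (Sigma * X) + nat) :
  (forall y', c = inl (a, y') -> ~ Q x' y') ->
  exists eps, 0 < eps /\ eps <= 1 /\ exists N, forall i, (N <= i)%nat ->
    eps <= lift (Phi_iter beta i) (inl (a, x')) c.
Proof.
  intros H. destruct c as [[b w]|w].
  - simpl. destruct excluded_middle_informative as [e|].
    + subst b. specialize (H w eq_refl). unfold Q in H.
      apply not_all_ex_not in H as [eps H].
      apply imply_to_and in H as [Heps H].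
      apply not_all_ex_not in H as [N H].
      exists (Rmin (eps/2) 1). split; [apply Rmin_pos; lra|]. split; [apply Rmin_r|].
      exists N. intros i Hi. destruct (Rle_dec eps (Phi_iter beta i x' w)).
      * pose proof (Rmin_l (eps/2) 1). lra.
      * exfalso; apply H; exists i; split; auto; lra.
    + exists 1; split; [lra|split; [lra|]]. exists 0%nat; intros; lra.
  - exists 1; split; [lra|split; [lra|]]. exists 0%nat; intros; simpl.
    unfold dec01; destruct excluded_middle_informative; [discriminate|lra].
Qed.

Lemma list_bound (a : Sigma) x' C :
  (forall y', In (inl (a, y')) C -> ~ Q x' y') ->
  exists eps, 0 < eps /\ eps <= 1 /\ exists N, forall i, (N <= i)%nat ->
    forall c, In c C -> eps <= lift (Phi_iter beta i) (inl (a, x')) c.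
Proof.
  induction C as [|c C IH]; intros H.
  - exists 1; split; [lra|split;[lra|]]; exists 0%nat; intros _ _ c [].
  - destruct IH as [e1 [He1 [He1' [N1 HN1]]]].
    { intros y' Hy; apply H; simpl; auto. }
    destruct (elem_bound a x' c) as [e2 [He2 [He2' [N2 HN2]]]].
    { intros y' ->; apply H; simpl; auto. }
    exists (Rmin e1 e2). split; [apply Rmin_pos; auto|]. split; [pose proof (Rmin_l e1 e2); lra|].
    exists (Nat.max N1 N2). intros i Hi c' [<-|Hc'].
    + pose proof (Rmin_r e1 e2). pose proof (HN2 i ltac:(lia)). lra.
    + pose proof (Rmin_l e1 e2). pose proof (HN1 i ltac:(lia) c' Hc'). lra.
Qed.

Lemma key A C a x' : In (inl (a, x')) A -> Hyp A C ->
  exists y', In (inl (a, y')) C /\ Q x' y'.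
Proof.
  intros Hin H. apply NNPP; intro Hn.
  destruct (list_bound a x' C) as [eps [He [He' [N HN]]]].
  { intros y' Hy HQ; apply Hn; eauto. }
  destruct (H eps He N) as [i [Hi Hlt]].
  pose proof (sup_ge (fun m => inf_list (fun c => lift (Phi_iter beta i) m c) C) _ _ Hin) as Hs.
  simpl in Hs.
  pose proof (inf_ge (fun c => lift (Phi_iter beta i) (inl (a, x')) c) C eps He' (HN i Hi)) as Hg.
  pose proof (Rle_trans _ _ _ Hg Hs). lra.
Qed.

Lemma Q_hyp u v : Q u v -> Hyp (beta u) (beta v) /\ Hyp (beta v) (beta u).
Proof.
  intros H. split; intros eps He N; destruct (H eps He (S N)) as [i [Hi Hlt]];
  destruct i as [|j]; try lia; exists j; split; try lia;
  simpl in Hlt; unfold Phi, hausdorff in Hlt.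
  - pose proof (Rmax_l (sup_list (fun a => inf_list (fun c => lift (Phi_iter beta j) a c) (beta v)) (beta u))
       (sup_list (fun c => inf_list (fun a => lift (Phi_iter beta j) c a) (beta u)) (beta v))). lra.
  - pose proof (Rmax_r (sup_list (fun a => inf_list (fun c => lift (Phi_iter beta j) a c) (beta v)) (beta u))
       (sup_list (fun c => inf_list (fun a => lift (Phi_iter beta j) c a) (beta u)) (beta v))). lra.
Qed.

Lemma Q_step u v : Q u v ->
  (forall w : nat, In (inr w) (beta u) <-> In (inr w) (beta v)) /\
  (forall a u', trans beta u a u' -> exists v', trans beta v a v' /\ Q u' v') /\
  (forall a v', trans beta v a v' -> exists u', trans beta u a u' /\ Q v' u').
Proof.
  intros H. destruct (Q_hyp u v H) as [H1 H2]. split; [|split].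
  - intros w; split; intros; eapply var_lemma; eauto.
  - intros a u' Ht. destruct (key _ _ _ _ Ht H1) as [v' [? ?]]; eauto.
  - intros a v' Ht. destruct (key _ _ _ _ Ht H2) as [u' [? ?]]; eauto.
Qed.

Lemma Q_bisim : bisimulation beta (fun u v => Q u v \/ Q v u).
Proof.
  intros u v [H|H].
  - destruct (Q_step u v H) as [Hv [Hf Hb]]. split; [auto|split].
    + intros a u' Ht; destruct (Hf a u' Ht) as [v' [? ?]]; eauto.
    + intros a v' Ht; destruct (Hb a v' Ht) as [u' [? ?]]; eauto.
  - destruct (Q_step v u H) as [Hv [Hf Hb]]. split; [intros w; rewrite Hv; tauto|split].
    + intros a u' Ht; destruct (Hb a u' Ht) as [v' [? ?]]; eauto.
    + intros a v' Ht; destruct (Hf a v' Ht) as [u' [? ?]]; eauto.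
Qed.

End B.

Lemma INR_lt_pow2 n : INR n < 2 ^ n.
Proof.
  induction n; [simpl; lra|]. rewrite S_INR; simpl.
  assert (1 <= 2 ^ n) by (replace 1 with (2^0) by (simpl; lra); apply Rle_pow; [lra|lia]). lra.
Qed.

Theorem mainTheorem8 (Sigma X : Type) (beta : prechart Sigma X)
  (Hlf : locally_finite beta) (x y : X) (Hnb : ~ bisimilar beta x y) :
  exists i : nat, Phi_iter beta i x y = Phi_iter beta (S i) x y.
Proof.
  apply NNPP; intro Hn. apply Hnb.
  exists (fun u v => Q beta u v \/ Q beta v u). split; [apply Q_bisim|left].
  assert (Hs : forall i, Phi_iter beta (S i) x y < Phi_iter beta i x y).
  { intro i. destruct (Rle_lt_or_eq_dec _ _ (decr beta i x y)); auto.
    exfalso; apply Hn; eauto. }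
  assert (Hinv : forall i, Phi_iter beta i x y = 0 \/
                 exists k, (i <= k)%nat /\ Phi_iter beta i x y = / 2 ^ k).
  { induction i.
    - destruct (vals beta 0 x y) as [|[k ?]]; [left; auto|right; exists k; split; [lia|auto]].
    - specialize (Hs i).
      pose proof (Sv_bounds _ (vals beta (S i) x y)).
      destruct IHi as [E|[k [Hk E]]]; [lra|].
      destruct (vals beta (S i) x y) as [|[m Em]]; [left; auto|right; exists m; split; auto].
      destruct (Nat.le_gt_cases m k) as [Hmk|]; [|lia]. exfalso.
      assert (/ 2 ^ k <= / 2 ^ m); [|lra].
      apply Rinv_le_contravar; [apply pow_lt; lra|apply Rle_pow; [lra|auto]]. }
  intros eps He N. destruct (archimed_cor1 eps He) as [n [Hn1 Hn2]].
  exists (Nat.max N n). split; [lia|].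
  destruct (Hinv (Nat.max N n)) as [->|[k [Hk ->]]]; [lra|].
  assert (/ 2 ^ k <= / INR n); [|lra].
  apply Rinv_le_contravar; [apply lt_0_INR; lia|].
  pose proof (INR_lt_pow2 n). assert (2 ^ n <= 2 ^ k) by (apply Rle_pow; [lra|lia]). lra.
Qed.
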